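(* Let $$y=\frac{(2s^2-1)(3s-1)}{2s(2s^2+2s-1)(s-1)},\qquad t=-\frac{(3s-1)^2}{8(2s^2+2s-1)(s-1)s^3}.$$ Then $y(t)$ is a solution of $\mathrm{P}_{\mathrm{VI}}$ with parameters $(\theta_1,\theta_2,\theta_3,\theta_4)=(1/3,3/4,1/3,3/4)$.
   Context: $\mathrm{P}_{\mathrm{VI}}$ is the equation $$\frac{d^2y}{dt^2}=\frac12\Big(\frac1y+\frac1{y-1}+\frac1{y-t}\Big)\Big(\frac{dy}{dt}\Big)^2-\Big(\frac1t+\frac1{t-1}+\frac1{y-t}\Big)\frac{dy}{dt}+\frac{y(y-1)(y-t)}{t^2(t-1)^2}\Big(\alpha+\beta\frac{t}{y^2}+\gamma\frac{t-1}{(y-1)^2}+\delta\frac{t(t-1)}{(y-t)^2}\Big),$$ with $\alpha=(\theta_4-1)^2/2$, $\beta=-\theta_1^2/2$, $\gamma=\theta_3^2/2$, $\delta=(1-\theta_2^2)/2$. When $y,t$ are given as rational functions of a parameter on a curve, derivatives with respect to $t$ are computed via the chain rule. *)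

(* Defs.v *)
From Stdlib Require Import Reals.
From Coquelicot Require Import Coquelicot.
Open Scope R_scope.

Definition pvi_alpha (th4 : R) : R := (th4 - 1) ^ 2 / 2.
Definition pvi_beta (th1 : R) : R := - th1 ^ 2 / 2.
Definition pvi_gamma (th3 : R) : R := th3 ^ 2 / 2.
Definition pvi_delta (th2 : R) : R := (1 - th2 ^ 2) / 2.

Definition PVI_rhs (th1 th2 th3 th4 t y y1 : R) : R :=
  / 2 * (/ y + / (y - 1) + / (y - t)) * y1 ^ 2
  - (/ t + / (t - 1) + / (y - t)) * y1
  + y * (y - 1) * (y - t) / (t ^ 2 * (t - 1) ^ 2)
    * (pvi_alpha th4 + pvi_beta th1 * t / y ^ 2
       + pvi_gamma th3 * (t - 1) / (y - 1) ^ 2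
       + pvi_delta th2 * t * (t - 1) / (y - t) ^ 2).

(* Parametric derivatives via the chain rule: for a curve s |-> (t s, y s),
   dy/dt = y'(s)/t'(s) and d^2y/dt^2 = (d/ds (y'/t'))(s) / t'(s). *)
Definition dydt (y t : R -> R) (s : R) : R := Derive y s / Derive t s.
Definition d2ydt2 (y t : R -> R) (s : R) : R :=
  Derive (dydt y t) s / Derive t s.

Definition y7 (s : R) : R :=
  (2 * s ^ 2 - 1) * (3 * s - 1) / (2 * s * (2 * s ^ 2 + 2 * s - 1) * (s - 1)).
Definition t7 (s : R) : R :=
  - (3 * s - 1) ^ 2 / (8 * (2 * s ^ 2 + 2 * s - 1) * (s - 1) * s ^ 3).

(* Main.v *)
Require Import Defs.
From Stdlib Require Import Reals Lra.
From Coquelicot Require Import Coquelicot.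
Open Scope R_scope.

Definition Ny x := (2 * x ^ 2 - 1) * (3 * x - 1).
Definition Dy x := 4*x^4 - 6*x^2 + 2*x.
Definition Ny' x := 18*x^2 - 4*x - 3.
Definition Dy' x := 16*x^3 - 12*x + 2.
Definition Nt x := - (3 * x - 1) ^ 2.
Definition Dt x := 16*x^6 - 24*x^4 + 8*x^3.
Definition Nt' x := -(18*x - 6).
Definition Dt' x := 96*x^5 - 96*x^3 + 24*x^2.
Definition Y1 x := (Ny' x * Dy x - Ny x * Dy' x) / (Dy x)^2.
Definition T1 x := (Nt' x * Dt x - Nt x * Dt' x) / (Dt x)^2.

Lemma Dy_nz x : x <> 0 -> x - 1 <> 0 -> 2 * x ^ 2 + 2 * x - 1 <> 0 -> Dy x <> 0.
Proof. intros. replace (Dy x) with (2*x*(x-1)*(2 * x ^ 2 + 2 * x - 1)) by (unfold Dy; ring).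
  repeat apply Rmult_integral_contrapositive_currified; auto; lra. Qed.
Lemma Dt_nz x : x <> 0 -> x - 1 <> 0 -> 2 * x ^ 2 + 2 * x - 1 <> 0 -> Dt x <> 0.
Proof. intros. replace (Dt x) with (8*x^3*(x-1)*(2 * x ^ 2 + 2 * x - 1)) by (unfold Dt; ring).
  repeat apply Rmult_integral_contrapositive_currified; auto; try lra; apply pow_nonzero; auto. Qed.

Ltac nz1 h := let E := fresh in intro E; apply h; rewrite <- E; ring.
Ltac nz h1 h2 h3 :=
  repeat (match goal with |- _ /\ _ => split end);
  repeat (first [ apply Rmult_integral_contrapositive_currified | apply pow_nonzero ]);
  try (first [ nz1 h1 | nz1 h2 | nz1 h3 | (intro; lra) | assumption ]).

Lemma dery x : x <> 0 -> x - 1 <> 0 -> 2 * x ^ 2 + 2 * x - 1 <> 0 ->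
  is_derive y7 x (Y1 x).
Proof.
  intros h1 h2 h3. pose proof (Dy_nz x h1 h2 h3). pose proof (Dt_nz x h1 h2 h3). unfold Dy, Dt in *. unfold y7, Y1, Ny, Dy, Ny', Dy'.
  auto_derive.
  - nz h1 h2 h3.
  - field. nz h1 h2 h3.
Qed.

Lemma dert x : x <> 0 -> x - 1 <> 0 -> 2 * x ^ 2 + 2 * x - 1 <> 0 ->
  is_derive t7 x (T1 x).
Proof.
  intros h1 h2 h3. pose proof (Dy_nz x h1 h2 h3). pose proof (Dt_nz x h1 h2 h3). unfold Dy, Dt in *. unfold t7, T1, Nt, Dt, Nt', Dt'.
  auto_derive.
  - nz h1 h2 h3.
  - field. nz h1 h2 h3.
Qed.
Lemma loc_nz (f:R->R) s: ex_derive f s -> f s <> 0 -> locally s (fun x => f x <> 0).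
Proof.
intros hd hs. apply (ex_derive_continuous f s hd (fun u => u <> 0)).
apply (locally_open (fun u => u <> 0)); auto. apply open_neq.
Qed.
Lemma loc3 s : s <> 0 -> s - 1 <> 0 -> 2 * s ^ 2 + 2 * s - 1 <> 0 ->
  locally s (fun x => x <> 0 /\ x - 1 <> 0 /\ 2 * x ^ 2 + 2 * x - 1 <> 0).
Proof.
intros h1 h2 h3.
apply filter_and. apply (loc_nz (fun x => x)); auto; auto_derive; auto.
apply filter_and. apply (loc_nz (fun x => x - 1)); auto; auto_derive; auto.
apply (loc_nz (fun x => 2 * x ^ 2 + 2 * x - 1)); auto; auto_derive; auto.
Qed.

Theorem mainTheorem7 (s : R) :
  s <> 0 -> s - 1 <> 0 -> 2 * s ^ 2 + 2 * s - 1 <> 0 ->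
  t7 s <> 0 -> t7 s - 1 <> 0 ->
  y7 s <> 0 -> y7 s - 1 <> 0 -> y7 s - t7 s <> 0 ->
  Derive t7 s <> 0 ->
  d2ydt2 y7 t7 s =
  PVI_rhs (1/3) (3/4) (1/3) (3/4) (t7 s) (y7 s) (dydt y7 t7 s).
Proof.
  intros h1 h2 h3 ht0 ht1 hy0 hy1 hyt hd.
  assert (Et : forall x, x <> 0 -> x - 1 <> 0 -> 2 * x ^ 2 + 2 * x - 1 <> 0 -> Derive t7 x = T1 x).
  { intros; apply is_derive_unique, dert; auto. }
  assert (Ey : forall x, x <> 0 -> x - 1 <> 0 -> 2 * x ^ 2 + 2 * x - 1 <> 0 -> Derive y7 x = Y1 x).
  { intros; apply is_derive_unique, dery; auto. }
  assert (Ed : forall x, x <> 0 -> x - 1 <> 0 -> 2 * x ^ 2 + 2 * x - 1 <> 0 -> dydt y7 t7 x = Y1 x / T1 x).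
  { intros; unfold dydt; rewrite Et, Ey; auto. }
  rewrite Et in hd; auto.
  assert (hN : Nt' s * Dt s - Nt s * Dt' s <> 0).
  { intro E; apply hd; unfold T1; rewrite E; unfold Rdiv; ring. }
  pose proof (Dy_nz s h1 h2 h3) as hDy. pose proof (Dt_nz s h1 h2 h3) as hDt.
  evar (l : R).
  assert (HG : is_derive (fun x => Y1 x / T1 x) s l).
  { unfold Y1, T1, Ny, Dy, Ny', Dy', Nt, Dt, Nt', Dt' in *. auto_derive.
    - repeat split;
      repeat (first [ apply Rmult_integral_contrapositive_currified | apply Rinv_neq_0_compat ]);
      first [ nz1 hDy | nz1 hDt | nz1 hN | (intro; lra) ].
    - unfold l. reflexivity. }
  assert (HD : Derive (dydt y7 t7) s = l).
  { apply is_derive_unique. apply (is_derive_ext_loc (fun x => Y1 x / T1 x)); auto.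
    apply (filter_imp (fun x => x <> 0 /\ x - 1 <> 0 /\ 2 * x ^ 2 + 2 * x - 1 <> 0)).
    - intros x [? [? ?]]. rewrite Ed; auto.
    - apply loc3; auto. }
  unfold d2ydt2. rewrite HD, Et, Ed; auto.
  unfold l, PVI_rhs, pvi_alpha, pvi_beta, pvi_gamma, pvi_delta.
  assert (P1 : 3*s-1 <> 0). { intro E; apply ht0; unfold t7; rewrite E; unfold Rdiv; ring. }
  assert (P2 : 2*s^2-1 <> 0). { intro E; apply hy0; unfold y7; rewrite E; unfold Rdiv; ring. }
  assert (P3 : Ny s - Dy s <> 0). { intro E; apply hy1; unfold y7.
     replace (2 * s * (2 * s ^ 2 + 2 * s - 1) * (s - 1)) with (Dy s) by (unfold Dy; ring).
     fold (Ny s). replace (Ny s) with (Dy s) by lra. field; auto. }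
  assert (P4 : Nt s - Dt s <> 0). { intro E; apply ht1; unfold t7.
     replace (8 * (2 * s ^ 2 + 2 * s - 1) * (s - 1) * s ^ 3) with (Dt s) by (unfold Dt; ring).
     fold (Nt s). replace (Nt s) with (Dt s) by lra. field; auto. }
  assert (P5 : Ny s * Dt s - Nt s * Dy s <> 0). { intro E; apply hyt; unfold t7, y7.
     replace (8 * (2 * s ^ 2 + 2 * s - 1) * (s - 1) * s ^ 3) with (Dt s) by (unfold Dt; ring).
     replace (2 * s * (2 * s ^ 2 + 2 * s - 1) * (s - 1)) with (Dy s) by (unfold Dy; ring).
     fold (Nt s). fold (Ny s). apply Rmult_eq_reg_r with (Dy s * Dt s).
     2: apply Rmult_integral_contrapositive_currified; auto.
     field_simplify; auto. rewrite <- E; ring. }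
  unfold Y1, T1, y7, t7, Ny, Dy, Ny', Dy', Nt, Dt, Nt', Dt' in *.
  field.
  repeat split; try assumption.
  - intro E; apply P5.
    replace ((2 * s ^ 2 - 1) * (3 * s - 1) * (16 * s ^ 6 - 24 * s ^ 4 + 8 * s ^ 3) -
      - (3 * s - 1) ^ 2 * (4 * s ^ 4 - 6 * s ^ 2 + 2 * s))
      with ((4 * s ^ 4 - 6 * s ^ 2 + 2 * s) / 2 *
        ((2 * s ^ 2 - 1) * (3 * s - 1) * (8 * s ^ 2) - - (3 * s - 1) ^ 2 * 2)) by (unfold Rdiv; field).
    rewrite E; ring.
  - nz1 P3.
  - nz1 P4.
Qed.
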